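(* Let $(\Omega,\mathcal F,\mathbb P)$ be an atomless probability space, let $X$ and $Y$ be continuously distributed random variables on it, and let $p\in(0,1)$. The following three statements are equivalent: (i) $X$ and $Y$ are weakly comonotonic with respect to $\mathcal P^X_p$; (ii) $X$ and $Y$ are weakly comonotonic with respect to $\mathcal P^Y_p$; (iii) $A^X_p=A^Y_p$ $\mathbb P$-almost surely.
   Context: For a random variable $Z$ and $p\in(0,1)$, $\mathrm{VaR}_p(Z)=\inf\{x\in\mathbb R:\mathbb P(Z\le x)>p\}$ and $A^Z_p=\{\omega\in\Omega: Z(\omega)>\mathrm{VaR}_p(Z)\}$. Let $\mathcal P^Z_p=\{\delta_\omega\times\delta_{\omega'}:\omega\in A^Z_p,\ \omega'\in (A^Z_p)^c\}$, where $\delta_\omega$ is the point mass at $\omega$. For a set $\mathcal P$ of product probability measures $\pi_1\times\pi_2$ on $(\Omega^2,\mathcal F\otimes\mathcal F)$, random variables $X,Y$ are called weakly comonotonic with respect to $\mathcal P$ if $\iint_{\Omega^2}(X(\omega)-X(\omega'))(Y(\omega)-Y(\omega'))\,\pi_1(\mathrm d\omega)\pi_2(\mathrm d\omega')\ge 0$ for every $\pi_1\times\pi_2\in\mathcal P$; for point masses this means $(X(\omega)-X(\omega'))(Y(\omega)-Y(\omega'))\ge0$. Random variables that are $\mathbb P$-a.s. equal are identified, so a statement such as ''$X$ and $Y$ are weakly comonotonic with respect to $\mathcal P^X_p$'' means that it holds for some representative versions of $X$ and $Y$. *)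

(* Defs.v *)
From HB Require Import structures.
From mathcomp Require Import all_boot all_order all_algebra.
From mathcomp Require Import all_classical all_reals all_analysis.
Set Implicit Arguments. Unset Strict Implicit. Unset Printing Implicit Defensive.
Import Order.TTheory GRing.Theory Num.Theory.
Import numFieldNormedType.Exports.
Local Open Scope classical_set_scope.
Local Open Scope ring_scope.

Definition atomless d (Omega : measurableType d) (R : realType)
  (P : probability Omega R) : Prop :=
  forall A : set Omega, measurable A -> (0 < P A)%E ->
    exists B : set Omega, [/\ measurable B, B `<=` A & (0 < P B < P A)%E].

Definition dfun d (Omega : measurableType d) (R : realType)
  (P : probability Omega R) (Z : Omega -> R) (x : R) : R :=
  fine (P [set w | Z w <= x]).

Definition continuously_distributed d (Omega : measurableType d) (R : realType)
  (P : probability Omega R) (Z : Omega -> R) : Prop :=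
  continuous (dfun P Z).

Definition lt_ereal (R : realType) (a b : \bar R) : Prop := (a < b)%E.

Definition VaR d (Omega : measurableType d) (R : realType)
  (P : probability Omega R) (p : R) (Z : Omega -> R) : R :=
  inf [set x : R | lt_ereal p%:E (P [set w | Z w <= x])].

Definition Aset d (Omega : measurableType d) (R : realType)
  (P : probability Omega R) (p : R) (Z : Omega -> R) : set Omega :=
  [set w | VaR P p Z < Z w].

(* Weak comonotonicity of X, Y w.r.t. the family of point-mass products
   { delta_w x delta_w' : w in A, w' notin A }: for point masses the integral
   condition reads (X w - X w')(Y w - Y w') >= 0. *)
Definition wcomon_points (Omega : Type) (R : realType) (A : set Omega)
  (X Y : Omega -> R) : Prop :=
  forall w w', A w -> ~ A w' -> 0 <= (X w - X w') * (Y w - Y w').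

Definition wcomon_PX d (Omega : measurableType d) (R : realType)
  (P : probability Omega R) (p : R) (X Y : Omega -> R) : Prop :=
  exists X' Y' : Omega -> R,
    [/\ measurable_fun setT X', measurable_fun setT Y',
        {ae P, forall w, X w = X' w}, {ae P, forall w, Y w = Y' w}
      & wcomon_points (Aset P p X') X' Y'].

Definition wcomon_PY d (Omega : measurableType d) (R : realType)
  (P : probability Omega R) (p : R) (X Y : Omega -> R) : Prop :=
  exists X' Y' : Omega -> R,
    [/\ measurable_fun setT X', measurable_fun setT Y',
        {ae P, forall w, X w = X' w}, {ae P, forall w, Y w = Y' w}
      & wcomon_points (Aset P p Y') X' Y'].

(* Main.v *)
Require Import Defs.
From HB Require Import structures.
From mathcomp Require Import all_boot all_order all_algebra.
From mathcomp Require Import all_classical all_reals all_analysis.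
From mathcomp Require Import lra.
Import Order.TTheory GRing.Theory Num.Theory.
Import numFieldNormedType.Exports.
Local Open Scope classical_set_scope.
Local Open Scope ring_scope.

Section S.
Context d (T : measurableType d) (R : realType) (P : probability T R).

Lemma mle (Z : T -> R) x : measurable_fun setT Z -> measurable [set w | Z w <= x].
Proof.
move=> mZ; have := mZ measurableT _ (measurable_itv `]-oo, x]).
rewrite setTI; congr measurable; apply/seteqP; split=> w /=; by rewrite in_itv.
Qed.

Lemma dfunE (Z : T -> R) x : measurable_fun setT Z ->
  P [set w | Z w <= x] = (dfun P Z x)%:E.
Proof. by move=> mZ; rewrite /dfun fineK// fin_num_measure//; exact: mle. Qed.

Lemma dfun_ge0 (Z : T -> R) x : 0 <= dfun P Z x.
Proof. by rewrite /dfun fine_ge0. Qed.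

Lemma dfun_mono (Z : T -> R) x y : measurable_fun setT Z -> x <= y -> dfun P Z x <= dfun P Z y.
Proof.
move=> mZ xy; rewrite -lee_fin -!dfunE//; apply: le_measure; rewrite ?inE; try exact: mle.
by move=> w /= /le_trans; apply.
Qed.

Lemma dfun_tails (Z : T -> R) p : measurable_fun setT Z -> 0 < p < 1 ->
  (exists x, p < dfun P Z x) /\ (exists y, dfun P Z y < p).
Proof.
move=> mZ /andP[p0 p1].
pose Zr : {RV P >-> R} := MeasurableFun.Pack (MeasurableFun.Class (isMeasurableFun.Build _ _ _ _ Z mZ)).
have cE r : fine (cdf Zr r) = dfun P Z r.
  rewrite /cdf /distribution /pushforward /dfun; congr (fine (P _)).
split.
- have /fine_cvgP[_ h] := cvg_cdfy1 Zr.
  have [M [_ HM]] := cvgr_gt _ h _ p1.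
  by exists (M + 1); rewrite -cE; apply: HM; rewrite ltrDl.
- have /fine_cvgP[_ h] := cvg_cdfNy0 Zr.
  have [M [_ HM]] := cvgr_lt _ h _ p0.
  by exists (M - 1); rewrite -cE; apply: HM; rewrite ltrBlDr ltrDl.
Qed.

Lemma VaR_df (Z : T -> R) p : measurable_fun setT Z -> continuously_distributed P Z ->
  0 < p < 1 -> dfun P Z (VaR P p Z) = p.
Proof.
move=> mZ cZ p01.
have SE : [set x | lt_ereal p%:E (P [set w | Z w <= x])] = [set x | p < dfun P Z x].
  by apply/seteqP; split=> x /=; rewrite /lt_ereal dfunE// lte_fin.
rewrite /VaR SE; set S := [set x | _].
have [[x0 Sx0] [y0 y0p]] := dfun_tails _ _ mZ p01.
have lbS : lbound S y0.
  move=> x /= px; rewrite leNgt; apply/negP => xy0.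
  have := dfun_mono _ _ _ mZ (ltW xy0); rewrite leNgt => /negP; apply.
  exact: lt_trans y0p px.
have hS : has_inf S by split; [exists x0 | exists y0].
set q := inf S.
have qS x : S x -> q <= x by move=> Sx; exact: (ge_inf hS.2).
have [H|H|//] := ltgtP (dfun P Z q) p.
- have [e /= e0 he] := iffLR (nbhs_normP _ _) (cvgr_lt _ (cZ q) _ H).
  have [x Sx xq] := inf_adherent e0 hS.
  have : dfun P Z x < p.
    apply: he => /=; rewrite distrC ger0_norm ?subr_ge0 ?qS// ltrBlDl.
    exact: xq.
  by rewrite ltNge (ltW Sx).
- have [e /= e0 he] := iffLR (nbhs_normP _ _) (cvgr_gt _ (cZ q) _ H).
  have : S (q - e / 2).
    apply: he => /=; rewrite opprB addrC subrK ger0_norm ?divr_ge0 ?(ltW e0)//.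
    by rewrite ltr_pdivrMr// ltr_pMr// ltr1n.
  move/qS => h; have : 0 < e / 2 by rewrite divr_gt0. lra.
Qed.

Lemma ae_measure (A B : set T) : measurable A -> measurable B ->
  {ae P, forall w, A w <-> B w} -> P A = P B.
Proof.
move=> mA mB [N [mN N0 sN]].
have h C : measurable C -> P C = P (C `\` N).
  move=> mC; rewrite (measureDI _ mC mN).
  rewrite [X in _ + X](subset_measure0 _ _ _ N0) ?adde0//; exact: measurableI.
rewrite (h A mA) (h B mB); congr (P _); apply/seteqP; split=> w [Cw Nw]; split=> //.
- have : A w <-> B w by apply: contra_notP Nw => hw; exact: sN.
  by move=> [+ _]; apply.
- have : A w <-> B w by apply: contra_notP Nw => hw; exact: sN.
  by move=> [_ +]; apply.
Qed.

Lemma ae_df (Z Z' : T -> R) : measurable_fun setT Z -> measurable_fun setT Z' ->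
  {ae P, forall w, Z w = Z' w} -> forall x, dfun P Z x = dfun P Z' x.
Proof.
move=> mZ mZ' e x; rewrite /dfun (ae_measure _ _ (mle _ x mZ) (mle _ x mZ'))//.
by apply: filterS e => w /= ->.
Qed.

Lemma ae_VaR (Z Z' : T -> R) p : measurable_fun setT Z -> measurable_fun setT Z' ->
  {ae P, forall w, Z w = Z' w} -> VaR P p Z = VaR P p Z'.
Proof.
move=> mZ mZ' e; rewrite /VaR; congr inf; apply/seteqP; split=> x /=;
  by rewrite /lt_ereal !dfunE// (ae_df _ _ mZ mZ' e).
Qed.

Lemma ae_Aset (Z Z' : T -> R) p : measurable_fun setT Z -> measurable_fun setT Z' ->
  {ae P, forall w, Z w = Z' w} -> {ae P, forall w, Aset P p Z w <-> Aset P p Z' w}.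
Proof.
move=> mZ mZ' e; rewrite /Aset (ae_VaR _ _ p mZ mZ' e); apply: filterS e => w /= ->.
by [].
Qed.

Lemma ae_sub (A B : set T) : measurable A -> measurable B -> A `<=` B -> P A = P B ->
  {ae P, forall w, A w <-> B w}.
Proof.
move=> mA mB AB PAB; exists (B `\` A); split; first exact: measurableD.
- have := measureDI P mB mA; rewrite setIidr// => h0; have h := etrans PAB h0.
  have fA : P A \is a fin_num by exact: fin_num_measure.
  by rewrite -(addeK (P (B `\` A)) fA) -h subee.
- move=> w /= nE; split.
  + by apply: contra_notP nE => nB; split => // /AB.
  + by move=> Aw; apply: nE; split => [/AB|_].
Qed.

Lemma core1 (X Y : T -> R) p : measurable_fun setT X -> measurable_fun setT Y ->
  continuously_distributed P X -> continuously_distributed P Y -> 0 < p < 1 ->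
  wcomon_PX P p X Y -> {ae P, forall w, Aset P p X w <-> Aset P p Y w}.
Proof.
move=> mX mY cX cY p01 [X' [Y' [mX' mY' eX eY H]]].
have cX' : continuously_distributed P X'.
  by rewrite /continuously_distributed -(funext (ae_df _ _ mX mX' eX)).
have cY' : continuously_distributed P Y'.
  by rewrite /continuously_distributed -(funext (ae_df _ _ mY mY' eY)).
suff K : {ae P, forall w, Aset P p X' w <-> Aset P p Y' w}.
  apply: filterS3 (ae_Aset _ _ p mX mX' eX) (ae_Aset _ _ p mY mY' eY) K.
  by move=> w h1 h2 h3; rewrite h1 h3 h2.
set qX := VaR P p X'; set qY := VaR P p Y'.
set U := [set w | X' w <= qX]; set V := [set w | Y' w <= qY].
have mU : measurable U by exact: mle.
have mV : measurable V by exact: mle.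
have PU : P U = p%:E by rewrite /U dfunE// VaR_df.
have PV : P V = p%:E by rewrite /V dfunE// VaR_df.
have AE w : Aset P p X' w <-> ~ U w by rewrite /Aset /U /= ltNge; split => /negP.
have BE w : Aset P p Y' w <-> ~ V w by rewrite /Aset /V /= ltNge; split => /negP.
have flip : {ae P, forall w, U w <-> V w} -> {ae P, forall w, Aset P p X' w <-> Aset P p Y' w}.
  apply: filterS => w h; rewrite AE BE; split => nw uw; apply: nw; exact/h.
apply: flip.
have [[w [Aw Yw]]|nex] := pselect (exists w, Aset P p X' w /\ Y' w <= qY).
- apply: ae_sub => //; last by rewrite PU PV.
  move=> w' Uw'; rewrite /V /=.
  have nA : ~ Aset P p X' w' by rewrite AE => /(_ Uw').
  have := H w w' Aw nA; rewrite pmulr_rge0; last first.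
    by rewrite subr_gt0; apply: le_lt_trans Aw; exact: Uw'.
  by rewrite subr_ge0 => /le_trans; apply.
- have : {ae P, forall w, V w <-> U w}.
    apply: ae_sub => //; last by rewrite PU PV.
    move=> w Vw; apply: contra_notP (nex) => nU; exists w; split => //.
    by rewrite AE.
  by apply: filterS => w h; split => /h.
Qed.

Lemma core2 (X Y : T -> R) p : measurable_fun setT X -> measurable_fun setT Y ->
  {ae P, forall w, Aset P p X w <-> Aset P p Y w} -> wcomon_PX P p X Y.
Proof.
move=> mX mY [N [mN N0 sN]].
set qX := VaR P p X; set qY := VaR P p Y.
have mf : measurable_fun setT (fun w => w \in N).
  apply: (measurable_fun_bool true); rewrite setTI.
  by rewrite (_ : _ @^-1` _ = N)//; apply/seteqP; split=> w /=; [move/set_mem|move/mem_set].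
pose X' w := if w \in N then qX - 1 else X w.
pose Y' w := if w \in N then qY - 1 else Y w.
have mX' : measurable_fun setT X' by apply: measurable_fun_ifT.
have mY' : measurable_fun setT Y' by apply: measurable_fun_ifT.
have eX : {ae P, forall w, X w = X' w}.
  exists N; split => // w /=; rewrite /X'.
  by case: ifPn => [/set_mem //|_ /(_ erefl) []].
have eY : {ae P, forall w, Y w = Y' w}.
  exists N; split => // w /=; rewrite /Y'.
  by case: ifPn => [/set_mem //|_ /(_ erefl) []].
exists X', Y'; split => //.
have vX : VaR P p X' = qX by rewrite /qX (ae_VaR _ _ p mX mX' eX).
have vY : VaR P p Y' = qY by rewrite /qY (ae_VaR _ _ p mY mY' eY).
have iff_out w : ~ N w -> (Aset P p X w <-> Aset P p Y w).
  by move=> nN; apply: contra_notP nN => h; exact: sN.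
move=> w w'; rewrite /Aset vX /= => Aw nAw'.
have nNw : ~ N w.
  move=> Nw; move: Aw; rewrite /X' ifT; last exact: mem_set.
  move=> h; have : qX - 1 < qX by rewrite ltrBlDr ltrDl ltr01.
  by rewrite ltNge (ltW h).
have X'w : X' w = X w by rewrite /X' ifF //; apply/negbTE/negP => /set_mem.
have Y'w : Y' w = Y w by rewrite /Y' ifF //; apply/negbTE/negP => /set_mem.
have AYw : qY < Y' w.
  rewrite Y'w; have [h _] := iff_out w nNw; apply: h; rewrite /Aset /=.
  by rewrite -/qX -X'w.
have X'w' : X' w' <= qX by rewrite leNgt; apply/negP.
have Y'w' : Y' w' <= qY.
  have [Nw'|nNw'] := pselect (N w').
    by rewrite /Y' ifT ?gerBl ?ler01//; exact: mem_set.
  have X'w'E : X' w' = X w' by rewrite /X' ifF //; apply/negbTE/negP => /set_mem.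
  rewrite /Y' ifF; last by apply/negbTE/negP => /set_mem.
  rewrite leNgt; apply/negP => h; apply: nAw'.
  have [_ h2] := iff_out w' nNw'; rewrite X'w'E; exact: h2.
apply: mulr_ge0; rewrite subr_ge0.
- by apply: le_trans X'w' (ltW Aw).
- by apply: le_trans Y'w' (ltW AYw).
Qed.

Lemma swapPY (X Y : T -> R) p : wcomon_PY P p X Y <-> wcomon_PX P p Y X.
Proof.
split=> [[X' [Y' [mX' mY' eX eY H]]]|[Y' [X' [mY' mX' eY eX H]]]].
- by exists Y', X'; split => // w w' a na; rewrite mulrC; exact: H.
- by exists X', Y'; split => // w w' a na; rewrite mulrC; exact: H.
Qed.

Lemma ae_symm (A B : set T) : {ae P, forall w, A w <-> B w} -> {ae P, forall w, B w <-> A w}.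
Proof. by apply: filterS => w [h1 h2]; split. Qed.

Lemma coreiff (X Y : T -> R) p : measurable_fun setT X -> measurable_fun setT Y ->
  continuously_distributed P X -> continuously_distributed P Y -> 0 < p < 1 ->
  wcomon_PX P p X Y <-> {ae P, forall w, Aset P p X w <-> Aset P p Y w}.
Proof. by move=> mX mY cX cY p01; split; [exact: core1|exact: core2]. Qed.
End S.

Theorem lemma3p1 (R : realType) (d : measure_display) (Omega : measurableType d)
  (P : probability Omega R) (X Y : Omega -> R) (p : R) :
  atomless P ->
  measurable_fun setT X -> measurable_fun setT Y ->
  continuously_distributed P X -> continuously_distributed P Y ->
  0 < p < 1 ->
  (wcomon_PX P p X Y <-> wcomon_PY P p X Y) /\
  (wcomon_PY P p X Y <-> {ae P, forall w, Aset P p X w <-> Aset P p Y w}).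
Proof.
move=> _ mX mY cX cY p01.
have h1 := @coreiff _ _ _ P X Y p mX mY cX cY p01.
have h2 := @coreiff _ _ _ P Y X p mY mX cY cX p01.
rewrite swapPY; split; split.
- by move/h1/ae_symm/h2.
- by move/h2/ae_symm/h1.
- by move/h2/ae_symm.
- by move/ae_symm/h2.
Qed.
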